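(* The inhomogeneous domain wall boundary partition function $Z_N(\{u\}_N|\{w\}_N)$ satisfies: (1) it is a polynomial in $w_N$ of degree at most $N-1$; (2) it is symmetric in $u_1,\dots,u_N$; (3) $Z_1(u_1|w_1)=(1-t)cu_1$; (4) for $N\ge2$ and each $k\in\{1,\dots,N\}$, \[Z_N(\{u\}_N|\{w\}_N)\big|_{w_N=-au_k/b}=(1-t)ca^{N-1}u_k\prod_{j\neq k}(tu_j-u_k)\prod_{j=1}^{N-1}(eu_k+fw_j)\,Z_{N-1}(u_1,\dots,\widehat{u_k},\dots,u_N|w_1,\dots,w_{N-1}),\] where $\widehat{u_k}$ means $u_k$ is omitted.
   Context: Fix complex parameters $t,a,b,c,d,e,f$, all nonzero, with $t\neq1$, satisfying $cd+af=0$ and $tcd+be=0$. The inhomogeneous $L$-operator $L_{aj}(u,w)$ on $W_a\otimes V_j$ ($\cong\mathbb{C}^2\otimes\mathbb{C}^2$, basis $|0\rangle,|1\rangle$) has matrix elements ${}_a\langle\gamma|{}_j\langle\delta|L_{aj}(u,w)|\alpha\rangle_a|\beta\rangle_j=[L(u,w)]^{\gamma\delta}_{\alpha\beta}$: $[L]^{00}_{00}=au+bw$, $[L]^{01}_{01}=atu+bw$, $[L]^{01}_{10}=(1-t)cu$, $[L]^{10}_{01}=(1-t)dw$, $[L]^{10}_{10}=eu+fw$, $[L]^{11}_{11}=eu+tfw$, all others $0$. Define $B_N(u|\{w\}_N)={}_a\langle0|L_{aN}(u,w_N)\cdots L_{a1}(u,w_1)|1\rangle_a$ on $V_1\otimes\cdots\otimes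 V_N$ and $Z_N(\{u\}_N|\{w\}_N)=\langle1\cdots N|B_N(u_1|\{w\}_N)\cdots B_N(u_N|\{w\}_N)|\Omega\rangle$ with $|\Omega\rangle=|0\rangle^{\otimes N}$, $\langle1\cdots N|=\langle1|^{\otimes N}$. *)

(* Defs.v *)
From HB Require Import structures.
From mathcomp Require Import all_boot all_order all_algebra.
Set Implicit Arguments. Unset Strict Implicit. Unset Printing Implicit Defensive.
Import Order.TTheory GRing.Theory Num.Theory.
Local Open Scope ring_scope.

Section Six.
Variable R : numClosedFieldType.
Variables t a b c d e f : R.

(* [L(u,w)]^{g dl}_{al be}, basis |0> = false, |1> = true:
   g = outgoing auxiliary, dl = outgoing quantum, al = incoming auxiliary,
   be = incoming quantum. *)
Definition Lent (u w : R) (g dl al be : bool) : R :=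
  match g, dl, al, be with
  | false, false, false, false => a * u + b * w
  | false, true,  false, true  => a * t * u + b * w
  | false, true,  true,  false => (1 - t) * c * u
  | true,  false, false, true  => (1 - t) * d * w
  | true,  false, true,  false => e * u + f * w
  | true,  true,  true,  true  => e * u + t * f * w
  | _, _, _, _ => 0
  end.

(* Matrix element of L_{a n}(u,w_n) ... L_{a 1}(u,w_1) between quantum
   basis states outs / ins on sites 1..n (listed in order w_1..w_n),
   with incoming auxiliary state al and outgoing auxiliary state fin. *)
Fixpoint chain (u : R) (ws : seq R) (outs ins : seq bool) (al fin : bool) : R :=
  match ws, outs, ins with
  | w :: ws', o :: os, i :: is_ =>
      \sum_(g : bool) Lent u w g o al i * chain u ws' os is_ g fin
  | [::], [::], [::] => (al == fin)%:R
  | _, _, _ => 0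
  end.

(* <outs| B_N(u|{w}_N) |ins> = <outs| _a<0| L_{aN}...L_{a1} |1>_a |ins> *)
Definition Bel (u : R) (ws : seq R) (outs ins : seq bool) : R :=
  chain u ws outs ins true false.

(* Z_N({u}_N|{w}_N) = <1...1| B(u_1) ... B(u_N) |0...0>;
   vectors are represented by their coordinate functions. *)
Definition Zpf (N : nat) (us ws : seq R) : R :=
  foldr (fun (u : R) (v : N.-tuple bool -> R) =>
           fun out : N.-tuple bool =>
             \sum_(s : N.-tuple bool) Bel u ws out s * v s)
        (fun s : N.-tuple bool => (s == nseq_tuple N false)%:R)
        us (nseq_tuple N true).

End Six.

(* Main.v *)
Require Import Defs.
From HB Require Import structures.
From mathcomp Require Import all_boot all_order all_algebra.
From mathcomp Require Import ring.
From Stdlib Require Import FunctionalExtensionality.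
Import Order.TTheory GRing.Theory Num.Theory.
Set Implicit Arguments. Unset Strict Implicit. Unset Printing Implicit Defensive.
Local Open Scope ring_scope.

Fixpoint allseqs (n : nat) : seq (seq bool) :=
  if n is n'.+1 then [seq b :: s | b <- [:: true; false], s <- allseqs n'] else [:: [::]].

Section Gen.
Variable S : comRingType.
Variables t a b c d e f : S.

Definition LentG (u w : S) (g dl al be : bool) : S :=
  match g, dl, al, be with
  | false, false, false, false => a * u + b * w
  | false, true,  false, true  => a * t * u + b * w
  | false, true,  true,  false => (1 - t) * c * u
  | true,  false, false, true  => (1 - t) * d * w
  | true,  false, true,  false => e * u + f * w
  | true,  true,  true,  true  => e * u + t * f * w
  | _, _, _, _ => 0
  end.

Fixpoint chainG (u : S) (ws : seq S) (outs ins : seq bool) (al fin : bool) : S :=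
  match ws, outs, ins with
  | w :: ws', o :: os, i :: is_ =>
      \sum_(g : bool) LentG u w g o al i * chainG u ws' os is_ g fin
  | [::], [::], [::] => (al == fin)%:R
  | _, _, _ => 0
  end.

Definition sumL n (F : seq bool -> S) := \sum_(s <- allseqs n) F s.

Lemma sumL_cons n F : sumL n.+1 F = \sum_(x : bool) sumL n (fun s => F (x :: s)).
Proof. by rewrite /sumL (@big_allpairs_dep _ _ _ _ _ _ (fun (b : bool) (s : seq bool) => b :: s)) big_bool !big_cons big_nil -/(allseqs n) /= addr0.
Qed.

Lemma sumL0 F : sumL 0 F = F [::].
Proof. by rewrite /sumL big_cons big_nil addr0. Qed.

Lemma sumL_rcons n F : sumL n.+1 F = sumL n (fun s => \sum_(x : bool) F (rcons s x)).
Proof.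
elim: n F => [|n IH] F.
  rewrite sumL_cons sumL0; apply: eq_bigr => x _; by rewrite sumL0.
rewrite sumL_cons (eq_bigr (fun x => sumL n (fun s => \sum_(y : bool) F (x :: rcons s y)))).
  by rewrite [RHS]sumL_cons.
by move=> x _; rewrite IH.
Qed.

Lemma size_allseqs n s : s \in allseqs n -> size s = n.
Proof.
elim: n s => [|n IH] s /=; first by rewrite inE => /eqP->.
by rewrite !mem_cat in_nil orbF => /orP[] /mapP[y /IH <- ->].
Qed.

Lemma sumL_ext n F G : (forall s, size s = n -> F s = G s) -> sumL n F = sumL n G.
Proof. by move=> H; apply: eq_big_seq => s /size_allseqs /H. Qed.

Lemma chainG_rcons u ws x o ob i ib al fin :
  size o = size ws -> size i = size ws ->
  chainG u (rcons ws x) (rcons o ob) (rcons i ib) al fin =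
  \sum_(g : bool) chainG u ws o i al g * LentG u x fin ob g ib.
Proof.
elim: ws o i al => [|w ws IH] [|o1 o] [|i1 i] al //=.
- move=> _ _; rewrite !big_bool; case: al; case: fin => /=; ring.
- case=> so; case=> si.
  under eq_bigr do rewrite IH // mulr_sumr.
  rewrite exchange_big /=; apply: eq_bigr => h _.
  by rewrite mulr_suml; apply: eq_bigr => g _; rewrite mulrA.
Qed.

End Gen.

Lemma chain_eq (R : numClosedFieldType) (t a b c d e f : R) u ws o i al fin :
  chain t a b c d e f u ws o i al fin = @chainG R t a b c d e f u ws o i al fin.
Proof. reflexivity. Qed.


Section Gen2.
Variable S : comRingType.
Variables t a b c d e f : S.

Definition appB u ws n (v : seq bool -> S) : seq bool -> S :=
  fun out => sumL n (fun s => chainG t a b c d e f u ws out s true false * v s).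

Definition ZG n us ws : S :=
  foldr (fun u v => appB u ws n v) (fun s => (s == nseq n false)%:R) us (nseq n true).

Lemma tuple_sumL n (F : seq bool -> S) :
  \sum_(s : n.-tuple bool) F s = sumL n F.
Proof.
elim: n F => [|n IH] F.
  rewrite sumL0 (big_pred1 ([tuple] : 0.-tuple bool)) // => s; by rewrite [s]tuple0 /= eq_refl.
have bij : bijective (fun p : bool * n.-tuple bool => [tuple of p.1 :: p.2]).
  exists (fun s : n.+1.-tuple bool => (thead s, [tuple of behead s])).
    by case=> x s /=; congr pair; apply: val_inj.
  by move=> s; apply: val_inj; rewrite /= [s in RHS]tuple_eta.
rewrite (reindex _ (onW_bij _ bij)) /= -(pair_big xpredT xpredT (fun x (s : n.-tuple bool) => F (x :: s))) /=.
rewrite sumL_cons; apply: eq_bigr => x _; exact: IH.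
Qed.

End Gen2.

Lemma Zpf_eq (R : numClosedFieldType) (t a b c d e f : R) N us ws :
  Zpf t a b c d e f N us ws = @ZG R t a b c d e f N us ws.
Proof.
rewrite /Zpf /ZG.
suff H : forall out : N.-tuple bool,
  foldr (fun (u : R) (v : N.-tuple bool -> R) =>
           fun out : N.-tuple bool =>
             \sum_(s : N.-tuple bool) Bel t a b c d e f u ws out s * v s)
        (fun s : N.-tuple bool => (s == nseq_tuple N false)%:R) us out =
  foldr (fun u v => appB t a b c d e f u ws N v) (fun s => (s == nseq N false)%:R) us out.
  exact: H.
elim: us => [|u us IH] out /=; first by [].
rewrite /appB -tuple_sumL; apply: eq_bigr => s _; by rewrite IH.
Qed.

Section Lin.
Variable S : comRingType.

Lemma sumLD n (F G : seq bool -> S) : sumL n (fun s => F s + G s) = sumL n F + sumL n G.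
Proof. exact: big_split. Qed.

Lemma sumLMl n k (F : seq bool -> S) : sumL n (fun s => k * F s) = k * sumL n F.
Proof. by rewrite /sumL mulr_sumr. Qed.

Lemma sumLMr n k (F : seq bool -> S) : sumL n (fun s => F s * k) = sumL n F * k.
Proof. by rewrite /sumL mulr_suml. Qed.

Lemma sumL_sum (I : finType) n (F : I -> seq bool -> S) :
  sumL n (fun s => \sum_(i : I) F i s) = \sum_(i : I) sumL n (F i).
Proof. by rewrite /sumL exchange_big. Qed.

Lemma sumL_swap n m (F : seq bool -> seq bool -> S) :
  sumL n (fun s => sumL m (F s)) = sumL m (fun s' => sumL n (fun s => F s s')).
Proof. by rewrite /sumL exchange_big. Qed.

Lemma sumL_0 n : sumL n (fun _ => 0 : S) = 0.
Proof. by rewrite /sumL big1. Qed.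

Lemma sumb (F : bool -> S) : \sum_(x : bool) F x = F true + F false.
Proof. by rewrite big_bool. Qed.

Lemma sum2 (F : bool * bool -> S) :
  \sum_(p : bool * bool) F p = F (true, true) + F (true, false) + F (false, true) + F (false, false).
Proof.
rewrite (eq_bigr (fun p => F (p.1, p.2))); last by case.
rewrite -(pair_bigA _ (fun x y => F (x, y))) !big_bool /=; ring.
Qed.

End Lin.

Section Morph.
Variables (S S' : comRingType) (phi : {rmorphism S -> S'}).
Variables t a b c d e f : S.

Lemma LentG_morph u w g dl al be :
  phi (LentG t a b c d e f u w g dl al be) =
  LentG (phi t) (phi a) (phi b) (phi c) (phi d) (phi e) (phi f) (phi u) (phi w) g dl al be.
Proof.
by case: g dl al be => [] [] [] []; rewrite /= ?rmorphD ?rmorphM ?rmorphB ?rmorph1 ?rmorph0.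
Qed.

Lemma chainG_morph u ws o i al fin :
  phi (chainG t a b c d e f u ws o i al fin) =
  chainG (phi t) (phi a) (phi b) (phi c) (phi d) (phi e) (phi f) (phi u) (map phi ws) o i al fin.
Proof.
elim: ws o i al => [|w ws IH] [|o1 o] [|i1 i] al /=; rewrite ?rmorph0 ?rmorph_nat //.
rewrite rmorph_sum; apply: eq_bigr => g _; by rewrite rmorphM LentG_morph IH.
Qed.

Lemma sumL_morph n F : phi (sumL n F) = sumL n (fun s => phi (F s)).
Proof. exact: rmorph_sum. Qed.

End Morph.

Section YBE.
Variable S : comRingType.
Variables t a b c d e f : S.
Hypothesis h1 : c * d + a * f = 0.
Hypothesis h2 : t * c * d + b * e = 0.

Local Notation L := (LentG t a b c d e f).

Definition Kv u v w o i (g ga : bool * bool) : S :=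
  \sum_(m : bool) L u w g.1 o ga.1 m * L v w g.2 m ga.2 i.

Definition Rm (u v : S) (g al : bool * bool) : S :=
  match g, al with
  | (false, false), (false, false) => t * u - v
  | (true, true), (true, true) => t * u - v
  | (false, true), (false, true) => (t - 1) * u
  | (false, true), (true, false) => u - v
  | (true, false), (false, true) => t * (u - v)
  | (true, false), (true, false) => (t - 1) * v
  | _, _ => 0
  end.

Lemma eq_rel (X Y l1 l2 : S) :
  X - Y = l1 * (c * d + a * f) + l2 * (t * c * d + b * e) -> X = Y.
Proof. by rewrite h1 h2 !mulr0 addr0 => /eqP; rewrite subr_eq0 => /eqP. Qed.

Lemma localYBE u v w o i g al :
  \sum_(ga : bool * bool) Kv u v w o i g ga * Rm u v ga al =
  \sum_(ga : bool * bool) Rm u v g ga * Kv v u w o i ga al.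
Proof.
case: o i g al => [] [] [[] []] [[] []]; rewrite !sum2 /Kv !big_bool /=; try ring.
all: first [ apply: (@eq_rel _ _ ((t-1)*u*w*(u-v)) (-((t-1)*u*w*(u-v)))); ring
           | apply: (@eq_rel _ _ (-((t-1)*u*w*(u-v))) ((t-1)*u*w*(u-v))); ring
           | apply: (@eq_rel _ _ ((t-1)*v*w*(v-u)) (-((t-1)*v*w*(v-u)))); ring
           | apply: (@eq_rel _ _ (-((t-1)*v*w*(v-u))) ((t-1)*v*w*(v-u))); ring
           | apply: (@eq_rel _ _ ((t-1)*u*w*(u-v)*t^+2) (-((t-1)*u*w*(u-v)))); ring
           | apply: (@eq_rel _ _ (-((t-1)*u*w*(u-v)*t^+2)) ((t-1)*u*w*(u-v))); ring
           | apply: (@eq_rel _ _ ((t-1)*v*w*(v-u)*t^+2) (-((t-1)*v*w*(v-u)))); ring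
           | apply: (@eq_rel _ _ (-((t-1)*v*w*(v-u)*t^+2)) ((t-1)*v*w*(v-u))); ring ].
Qed.

Definition DD u v ws o i (g ga : bool * bool) : S :=
  sumL (size ws) (fun s => chainG t a b c d e f u ws o s ga.1 g.1 *
                           chainG t a b c d e f v ws s i ga.2 g.2).

Lemma DD_cons u v w ws o1 o i1 i g ga :
  DD u v (w :: ws) (o1 :: o) (i1 :: i) g ga =
  \sum_(h : bool * bool) Kv u v w o1 i1 h ga * DD u v ws o i g h.
Proof.
rewrite /DD /= sumL_cons.
transitivity (\sum_(m : bool) \sum_(g1 : bool) \sum_(g2 : bool)
   (L u w g1 o1 ga.1 m * L v w g2 m ga.2 i1) *
   sumL (size ws) (fun s => chainG t a b c d e f u ws o s g1 g.1 *
                           chainG t a b c d e f v ws s i g2 g.2)).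
  apply: eq_bigr => m _.
  transitivity (sumL (size ws) (fun s => \sum_(g1 : bool) \sum_(g2 : bool)
     (L u w g1 o1 ga.1 m * L v w g2 m ga.2 i1) *
     (chainG t a b c d e f u ws o s g1 g.1 * chainG t a b c d e f v ws s i g2 g.2))).
    apply: sumL_ext => s _ /=; rewrite mulr_suml; apply: eq_bigr => g1 _; rewrite mulr_sumr.
    apply: eq_bigr => g2 _; ring.
  rewrite sumL_sum; apply: eq_bigr => g1 _; rewrite sumL_sum; apply: eq_bigr => g2 _.
  by rewrite sumLMl.
rewrite (eq_bigr (fun h => \sum_(m : bool) L u w h.1 o1 ga.1 m * L v w h.2 m ga.2 i1 *
   DD u v ws o i g h)); last by move=> h _; rewrite /Kv mulr_suml.
rewrite [RHS]exchange_big /=; apply: eq_bigr => m _.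
by rewrite sum2 !big_bool /DD /=; ring.
Qed.

Lemma DD_nilo u v w ws i g ga : DD u v (w :: ws) [::] i g ga = 0.
Proof.
rewrite /DD /= sumL_cons big1 // => m _.
by rewrite (sumL_ext (G := fun _ => 0)) ?sumL_0 // => s _; rewrite /= mul0r.
Qed.

Lemma DD_nili u v w ws o g ga : DD u v (w :: ws) o [::] g ga = 0.
Proof.
rewrite /DD /= sumL_cons big1 // => m _.
by rewrite (sumL_ext (G := fun _ => 0)) ?sumL_0 // => -[|? ?] _; rewrite /= mulr0.
Qed.

Lemma globalYBE u v ws o i be al :
  \sum_(ga : bool * bool) DD u v ws o i be ga * Rm u v ga al =
  \sum_(de : bool * bool) Rm u v be de * DD v u ws o i de al.
Proof.
elim: ws o i be al => [|w ws IH] o i be al.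
  case: o i => [|? ?] [|? ?]; case: be al => [[] []] [[] []];
  rewrite /DD /= !sum2 /= !sumL0 /=; ring.
case: o => [|o1 o]; first by rewrite !big1 // => h _; rewrite DD_nilo ?mul0r ?mulr0.
case: i => [|i1 i]; first by rewrite !big1 // => h _; rewrite DD_nili ?mul0r ?mulr0.
transitivity (\sum_(g : bool * bool) (\sum_(ga : bool * bool) Kv u v w o1 i1 g ga * Rm u v ga al)
   * DD u v ws o i be g).
  under eq_bigr do rewrite DD_cons mulr_suml.
  rewrite exchange_big /=; apply: eq_bigr => g _; rewrite mulr_suml.
  apply: eq_bigr => ga _; ring.
under eq_bigr do rewrite localYBE // mulr_suml.
rewrite exchange_big /=.
transitivity (\sum_(ga : bool * bool) Kv v u w o1 i1 ga al *
   (\sum_(g : bool * bool) DD u v ws o i be g * Rm u v g ga)).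
  apply: eq_bigr => ga _; rewrite mulr_sumr; apply: eq_bigr => g _; ring.
transitivity (\sum_(ga : bool * bool) \sum_(de : bool * bool) Kv v u w o1 i1 ga al *
   (Rm u v be de * DD v u ws o i de ga)).
  apply: eq_bigr => ga _; rewrite IH mulr_sumr //.
rewrite exchange_big /=; apply: eq_bigr => de _.
rewrite DD_cons mulr_sumr; apply: eq_bigr => ga _; ring.
Qed.

End YBE.

Lemma BB_gen (S : comRingType) (t a b c d e f : S)
  (h1 : c * d + a * f = 0) (h2 : t * c * d + b * e = 0) u v ws o i :
  (t * u - v) * DD t a b c d e f u v ws o i (false, false) (true, true) =
  (t * u - v) * DD t a b c d e f v u ws o i (false, false) (true, true).
Proof.
have := globalYBE h1 h2 u v ws o i (false, false) (true, true).
by rewrite !sum2 /= !mulr0 !mul0r !addr0 !add0r mulrC.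
Qed.

Lemma DD_morph (S S' : comRingType) (phi : {rmorphism S -> S'}) (t a b c d e f : S) u v ws o i g ga :
  phi (DD t a b c d e f u v ws o i g ga) =
  DD (phi t) (phi a) (phi b) (phi c) (phi d) (phi e) (phi f) (phi u) (phi v) (map phi ws) o i g ga.
Proof.
rewrite /DD sumL_morph size_map; apply: sumL_ext => s _.
by rewrite rmorphM !chainG_morph.
Qed.

Lemma hornerC_map (R : comRingType) (x : R) ws : map (horner_eval x) (map polyC ws) = ws.
Proof. by elim: ws => //= w ws ->; rewrite /horner_eval hornerC. Qed.

Lemma BB_comm (R : fieldType) (t a b c d e f : R) (ht0 : t != 0)
  (h1 : c * d + a * f = 0) (h2 : t * c * d + b * e = 0) u v ws o i :
  DD t a b c d e f u v ws o i (false, false) (true, true) =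
  DD t a b c d e f v u ws o i (false, false) (true, true).
Proof.
have h1' : c%:P * d%:P + a%:P * f%:P = 0 :> {poly R} by rewrite -!polyCM -polyCD h1.
have h2' : t%:P * c%:P * d%:P + b%:P * e%:P = 0 :> {poly R} by rewrite -!polyCM -polyCD h2.
have nz : t%:P * 'X - v%:P != 0 :> {poly R}.
  apply/eqP => /(congr1 (fun p : {poly R} => p`_1)).
  rewrite coefB coefCM coefX coefC /= mulr1 subr0 => ht; move: ht0; by rewrite ht coef0 eqxx.
have := BB_gen h1' h2' 'X v%:P (map polyC ws) o i.
move/(mulfI nz)/(congr1 (horner_eval u)).
rewrite !DD_morph /= hornerC_map /horner_eval !hornerC hornerX => ->.
done.
Qed.

Lemma foldr_perm (T : eqType) (V : Type) (F : T -> V -> V) :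
  (forall x y v, F x (F y v) = F y (F x v)) ->
  forall (s1 s2 : seq T) v, perm_eq s1 s2 -> foldr F v s1 = foldr F v s2.
Proof.
move=> Fc.
have comm : forall x s v, foldr F (F x v) s = F x (foldr F v s).
  by move=> x; elim=> //= y s IH v; rewrite IH Fc.
elim=> [|x s1 IH] s2 v.
  by move/perm_size; case: s2.
move=> pe; have xin : x \in s2 by rewrite -(perm_mem pe) mem_head.
move: pe; case/splitPr: s2 / xin => s2a s2b pe.
rewrite foldr_cat /= comm -foldr_cat; congr (F x _); apply: IH.
rewrite -(perm_cons x); apply: (perm_trans pe).
by rewrite (perm_catCA s2a [:: x] s2b).
Qed.

Lemma appB_comm (R : fieldType) (t a b c d e f : R) (ht0 : t != 0)
  (h1 : c * d + a * f = 0) (h2 : t * c * d + b * e = 0) u v ws n vec :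
  size ws = n ->
  appB t a b c d e f u ws n (appB t a b c d e f v ws n vec) =
  appB t a b c d e f v ws n (appB t a b c d e f u ws n vec).
Proof.
move=> sw; apply: functional_extensionality => out.
suff H : forall u v, appB t a b c d e f u ws n (appB t a b c d e f v ws n vec) out =
   sumL n (fun s' => DD t a b c d e f u v ws out s' (false, false) (true, true) * vec s').
  by rewrite !H; apply: sumL_ext => s' _; rewrite BB_comm.
move=> u' v'; rewrite /appB.
rewrite (sumL_ext (G := fun s => sumL n (fun s' =>
   chainG t a b c d e f u' ws out s true false * (chainG t a b c d e f v' ws s s' true false * vec s')))); last by move=> s _; rewrite sumLMl.
rewrite sumL_swap; apply: sumL_ext => s' _.
rewrite /DD sw -sumLMr; apply: sumL_ext => s _ /=; ring.
Qed.

Lemma sym_part (R : fieldType) (t a b c d e f : R) (ht0 : t != 0)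
  (h1 : c * d + a * f = 0) (h2 : t * c * d + b * e = 0) N us us' ws :
  size ws = N -> perm_eq us us' ->
  ZG t a b c d e f N us ws = ZG t a b c d e f N us' ws.
Proof.
move=> sw pe; rewrite /ZG; congr (_ _).
apply: foldr_perm pe => x y vv; exact: appB_comm.
Qed.

Lemma nseqS_rcons (T : Type) n (x : T) : nseq n.+1 x = rcons (nseq n x) x.
Proof. by elim: n => //= n ->. Qed.

Section Last.
Variable S : comRingType.
Variables t a b c d e f : S.
Local Notation L := (LentG t a b c d e f).
Local Notation ch := (chainG t a b c d e f).
Local Notation app := (appB t a b c d e f).

Definition Dop u ws n (v : seq bool -> S) : seq bool -> S :=
  fun o => sumL n (fun s => ch u ws o s true true * v s).

Lemma last0 u ws x n v o : size ws = n -> size o = n ->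
  app u (rcons ws x) n.+1 v (rcons o false) =
  (a * u + b * x) * app u ws n (fun s => v (rcons s false)) o.
Proof.
move=> sw so; rewrite /appB sumL_rcons -sumLMl; apply: sumL_ext => s ss.
rewrite big_bool !chainG_rcons ?sw ?so ?ss // !big_bool /=; ring.
Qed.

Lemma last1 u ws x n v o : size ws = n -> size o = n ->
  app u (rcons ws x) n.+1 v (rcons o true) =
  (a * t * u + b * x) * app u ws n (fun s => v (rcons s true)) o +
  (1 - t) * c * u * Dop u ws n (fun s => v (rcons s false)) o.
Proof.
move=> sw so; rewrite /appB /Dop sumL_rcons -!sumLMl -sumLD; apply: sumL_ext => s ss.
rewrite big_bool !chainG_rcons ?sw ?so ?ss // !big_bool /=; ring.
Qed.

Lemma sumL_delta n (F : seq bool -> S) z : size z = n ->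
  sumL n (fun s => F s * (s == z)%:R) = F z.
Proof.
elim: n F z => [|n IH] F z.
  by case: z => // _; rewrite sumL0 /= mulr1.
case: z => // z1 z [sz]; rewrite sumL_cons big_bool.
have H0 : forall x, x != z1 -> sumL n (fun s => F (x :: s) * ((x :: s) == z1 :: z)%:R) = 0.
  move=> x xz; rewrite (sumL_ext (G := fun _ => 0)) ?sumL_0 // => s _.
  by rewrite eqseq_cons (negbTE xz) /= mulr0.
have H1 : sumL n (fun s => F (z1 :: s) * ((z1 :: s) == z1 :: z)%:R) = F (z1 :: z).
  rewrite -(IH (fun s => F (z1 :: s)) z sz); apply: sumL_ext => s _.
  by rewrite eqseq_cons eqxx.
by case: z1 H0 H1 => H0 H1 /=; rewrite H1 H0 // ?addr0 ?add0r.
Qed.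

Lemma chain_zero_ff u ws o : ch u ws o (nseq (size ws) false) false true = 0.
Proof.
elim: ws o => [|w ws IH] [|o1 o] //=.
rewrite sumb IH mulr0 addr0.
by case: o1 => /=; rewrite mul0r.
Qed.

Lemma chain_D_vac u ws o :
  ch u ws o (nseq (size ws) false) true true =
  (o == nseq (size ws) false)%:R * \prod_(w <- ws) (e * u + f * w).
Proof.
elim: ws o => [|w ws IH] [|o1 o] /=; rewrite ?big_nil ?mulr1 ?mul0r //.
rewrite sumb big_cons.
have -> : ch u ws o (nseq (size ws) false) false true = 0 by apply: chain_zero_ff.
rewrite mulr0 addr0 IH eqseq_cons.
case: o1 => /=; last by ring.
by rewrite mul0r mulr0n mul0r.
Qed.

Lemma Dop_vac u ws n o : size ws = n ->
  Dop u ws n (fun s => (s == nseq n false)%:R) o =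
  (o == nseq n false)%:R * \prod_(w <- ws) (e * u + f * w).
Proof.
move=> sw; rewrite /Dop sumL_delta ?size_nseq // -sw; exact: chain_D_vac.
Qed.

End Last.

Section Rec.
Variable S : comRingType.
Variables t a b c d e f : S.
Local Notation app := (appB t a b c d e f).

Definition Om n : seq bool -> S := fun s => (s == nseq n false)%:R.

Lemma app_zero u ws n (v : seq bool -> S) o :
  (forall s, size s = n -> v s = 0) -> app u ws n v o = 0.
Proof.
move=> H; rewrite /appB (sumL_ext (G := fun _ => 0)) ?sumL_0 // => s ss.
by rewrite H ?mulr0.
Qed.

Lemma Dop_zero u ws n (v : seq bool -> S) o :
  (forall s, size s = n -> v s = 0) -> Dop t a b c d e f u ws n v o = 0.
Proof.
move=> H; rewrite /Dop (sumL_ext (G := fun _ => 0)) ?sumL_0 // => s ss.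
by rewrite H ?mulr0.
Qed.

Lemma rec_main uk us ws x n : size ws = n -> a * uk + b * x = 0 ->
  forall o, size o = n ->
  foldr (fun u v => app u (rcons ws x) n.+1 v) (app uk (rcons ws x) n.+1 (Om n.+1)) us (rcons o false) = 0 /\
  foldr (fun u v => app u (rcons ws x) n.+1 v) (app uk (rcons ws x) n.+1 (Om n.+1)) us (rcons o true) =
  (\prod_(u <- us) (a * t * u + b * x)) * ((1 - t) * c * uk * \prod_(w <- ws) (e * uk + f * w)) *
  foldr (fun u v => app u ws n v) (Om n) us o.
Proof.
move=> sw hx; elim: us => [|u us IH] o so /=.
  rewrite last0 // last1 // hx mul0r; split => //.
  rewrite app_zero; last by move=> s _; rewrite /Om nseqS_rcons eqseq_rcons andbF.
  rewrite (_ : Dop _ _ _ _ _ _ _ _ _ _ _ _ = Dop t a b c d e f uk ws n (Om n) o).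
    rewrite Dop_vac // big_nil /Om; ring.
  by rewrite /Dop; apply: sumL_ext => s _; rewrite /Om nseqS_rcons eqseq_rcons andbT.
rewrite last0 // last1 //; split.
  by rewrite app_zero ?mulr0 // => s ss; case: (IH s ss).
rewrite Dop_zero ?mulr0 ?addr0; last by move=> s ss; case: (IH s ss).
rewrite big_cons /appB.
set P := \prod_(j <- us) _. set K := _ * \prod_(w <- ws) _.
transitivity ((a * t * u + b * x) * sumL n (fun s => (P * K) *
   (chainG t a b c d e f u ws o s true false *
    foldr (fun u v => app u ws n v) (Om n) us s))).
  congr (_ * _); apply: sumL_ext => s ss; case: (IH s ss) => _ ->; rewrite /P /K; ring.
rewrite sumLMl; ring.
Qed.

End Rec.

Lemma prod_skip (R : comRingType) (G : R -> R) (us : seq R) N k :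
  size us = N -> (k < N)%N ->
  \prod_(j < N | j != k :> nat) G us`_j = \prod_(x <- take k us ++ drop k.+1 us) G x.
Proof.
move=> su kN.
rewrite -(big_mkord (fun j => j != k) (fun j => G us`_j)) -big_filter.
have -> : take k us ++ drop k.+1 us = map (nth 0 us) [seq j <- iota 0 N | j != k].
  have eN : N = (k + (1 + (N - k.+1)))%N by rewrite addnA addn1 subnKC.
  rewrite eN iotaD iotaD /= filter_cat /= eqxx /= add0n.
  rewrite (_ : filter _ (iota 0 k) = iota 0 k); last first.
    apply/all_filterP/allP => j; rewrite mem_iota add0n /= => jk.
    by rewrite neq_ltn jk.
  rewrite (_ : filter _ (iota _ _) = iota (k + 1)%N (N - k.+1)%N); last first.
    apply/all_filterP/allP => j; rewrite mem_iota /= => /andP[kj _].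
    by rewrite addn1 in kj; rewrite neq_ltn kj orbT.
  rewrite map_cat map_nth_iota0 ?su ?(ltnW kN) // addn1 map_nth_iota ?su //.
  by rewrite [take (N - _) _]take_oversize ?size_drop ?su.
by rewrite /index_iota subn0 big_map.
Qed.

Lemma prod_const_mul (R : comRingType) (k : R) (G : R -> R) (s : seq R) :
  \prod_(x <- s) (k * G x) = k ^+ size s * \prod_(x <- s) G x.
Proof.
elim: s => [|y s IH]; first by rewrite !big_nil expr0 mulr1.
by rewrite !big_cons IH /= exprS; ring.
Qed.

Lemma part4 (R : fieldType) (t a b c d e f : R) (ht0 : t != 0) (hb : b != 0)
  (h1 : c * d + a * f = 0) (h2 : t * c * d + b * e = 0) N us ws k :
  (2 <= N)%N -> size us = N -> size ws = (N - 1)%N -> (k < N)%N ->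
  ZG t a b c d e f N us (rcons ws (- (a * us`_k) / b)) =
  (1 - t) * c * a ^+ (N - 1) * us`_k
  * (\prod_(j < N | j != k :> nat) (t * us`_j - us`_k))
  * (\prod_(w <- ws) (e * us`_k + f * w))
  * ZG t a b c d e f (N - 1) (take k us ++ drop k.+1 us) ws.
Proof.
case: N => [|n] // _ su; rewrite subn1 /= => sw kN.
set uk := us`_k; set us' := take k us ++ drop k.+1 us; set x := - (a * uk) / b.
have bx : b * x = - (a * uk) by rewrite /x mulrC divfK.
have hx : a * uk + b * x = 0 by rewrite bx subrr.
have pe : perm_eq us (rcons us' uk).
  rewrite -{1}(cat_take_drop k us) (drop_nth 0) ?su // -/uk.
  rewrite -cat1s (perm_catCA (take k us) [:: uk] (drop k.+1 us)).
  by rewrite perm_sym perm_rcons.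
have sus' : size us' = n.
  rewrite size_cat size_take size_drop su kN subSS subnKC //.
rewrite (@sym_part _ t a b c d e f ht0 h1 h2 n.+1 us (rcons us' uk) (rcons ws x)) ?size_rcons ?sw //.
rewrite /ZG foldr_rcons [nseq n.+1 true]nseqS_rcons.
have [_ ->] := @rec_main _ t a b c d e f uk us' ws x n sw hx (nseq n true) (size_nseq n true).
rewrite (prod_skip (fun y => t * y - uk) su kN) -/us'.
rewrite (eq_bigr (fun y => a * (t * y - uk))); last by move=> y _; rewrite mulrBr -bx; ring.
rewrite prod_const_mul sus' /Om; ring.
Qed.

Lemma part3 (R : fieldType) (t a b c d e f : R) u1 w1 :
  ZG t a b c d e f 1 [:: u1] [:: w1] = (1 - t) * c * u1.
Proof.
rewrite /ZG /= /appB sumL_delta //= sumb /=; ring.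
Qed.

Lemma ZG_morph (S S' : comRingType) (phi : {rmorphism S -> S'}) (t a b c d e f : S) N us ws :
  phi (ZG t a b c d e f N us ws) =
  ZG (phi t) (phi a) (phi b) (phi c) (phi d) (phi e) (phi f) N (map phi us) (map phi ws).
Proof.
rewrite /ZG; move: (nseq N true); elim: us => [|u us IH] out /=.
  by rewrite rmorph_nat.
rewrite /appB sumL_morph; apply: sumL_ext => s _.
by rewrite rmorphM chainG_morph IH.
Qed.

Section Deg.
Variable R : fieldType.
Variables t a b c d e f : R.
Local Notation P := (fun r : R => r%:P).
Local Notation appP u ws n := (appB (P t) (P a) (P b) (P c) (P d) (P e) (P f) u ws n).

Lemma size_mul_le (p q : {poly R}) i j :
  (size p <= i)%N -> (size q <= j)%N -> (size (p * q)%R <= (i + j).-1)%N.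
Proof.
move=> hp hq; apply: (leq_trans (size_polyMleq p q)).
by rewrite -!subn1 leq_sub2r // leq_add.
Qed.

Lemma sizeC1 r : (size (r%:P : {poly R}) <= 1)%N.
Proof. exact: size_polyC_leq1. Qed.

Lemma size_sumL n (F : seq bool -> {poly R}) k :
  (forall s, size s = n -> (size (F s) <= k)%N) -> (size (sumL n F) <= k)%N.
Proof.
move=> H; rewrite /sumL big_seq.
apply: (big_ind (fun p : {poly R} => (size p <= k)%N)).
- by rewrite size_poly0.
- move=> p q hp hq; apply: (leq_trans (size_polyD p q)); by rewrite geq_max hp hq.
- by move=> s /size_allseqs /H.
Qed.

Lemma size_appP u ws n (v : seq bool -> {poly R}) (o : seq bool) k :
  (forall s, size s = n -> (size (v s) <= k)%N) ->
  (size (appP (P u) (map P ws) n v o) <= k)%N.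
Proof.
move=> H; apply: size_sumL => s ss.
rewrite -(chainG_morph (polyC : {rmorphism R -> {poly R}})) mul_polyC.
exact: leq_trans (size_scale_leq _ _) (H s ss).
Qed.

Lemma size_DopP u ws n (v : seq bool -> {poly R}) (o : seq bool) k :
  (forall s, size s = n -> (size (v s) <= k)%N) ->
  (size (Dop (P t) (P a) (P b) (P c) (P d) (P e) (P f) (P u) (map P ws) n v o) <= k)%N.
Proof.
move=> H; apply: size_sumL => s ss.
rewrite -(chainG_morph (polyC : {rmorphism R -> {poly R}})) mul_polyC.
exact: leq_trans (size_scale_leq _ _) (H s ss).
Qed.

Lemma deg_main us ws n : size ws = n -> forall o, size o = n ->
  (size (foldr (fun u v => appP u (rcons (map P ws) 'X) n.+1 v) (Om _ n.+1) (map P us)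
     (rcons o false)) <= (size us).+1)%N /\
  (size (foldr (fun u v => appP u (rcons (map P ws) 'X) n.+1 v) (Om _ n.+1) (map P us)
     (rcons o true)) <= size us)%N.
Proof.
move=> sw; elim: us => [|u us IH] o so /=.
  rewrite /Om nseqS_rcons !eqseq_rcons andbF /=; split; last by rewrite size_poly0.
  by case: (o == nseq n false); rewrite ?size_poly1 ?size_poly0.
have swm : size (map P ws) = n by rewrite size_map.
rewrite last0 // last1 //; split.
  have -> : (size us).+2 = ((2 + (size us).+1).-1)%N by [].
  apply: size_mul_le; last by apply: size_appP => s ss; case: (IH s ss).
  apply: (leq_trans (size_polyD _ _)); rewrite geq_max; apply/andP; split.
    by rewrite -polyCM (leq_trans (sizeC1 _)).
  by rewrite mul_polyC (leq_trans (size_scale_leq _ _)) // size_polyX.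
apply: (leq_trans (size_polyD _ _)); rewrite geq_max; apply/andP; split.
  have -> : (size us).+1 = ((2 + size us).-1)%N by [].
  apply: size_mul_le; last by apply: size_appP => s ss; case: (IH s ss).
  apply: (leq_trans (size_polyD _ _)); rewrite geq_max; apply/andP; split.
    by rewrite -!polyCM (leq_trans (sizeC1 _)).
  by rewrite mul_polyC (leq_trans (size_scale_leq _ _)) // size_polyX.
have -> : (size us).+1 = ((1 + (size us).+1).-1)%N by [].
apply: size_mul_le; last by apply: size_DopP => s ss; case: (IH s ss).
by rewrite -polyC1 -polyCB -!polyCM sizeC1.
Qed.

End Deg.

Lemma part1 (R : fieldType) (t a b c d e f : R) N us ws :
  size us = N.+1 -> size ws = N ->
  exists p : {poly R}, (size p <= N.+1)%N /\
    forall x : R, ZG t a b c d e f N.+1 us (rcons ws x) = p.[x].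
Proof.
move=> su sw.
exists (ZG (t%:P) (a%:P) (b%:P) (c%:P) (d%:P) (e%:P) (f%:P) N.+1 (map polyC us) (rcons (map polyC ws) 'X)).
split.
  rewrite /ZG [nseq N.+1 true]nseqS_rcons.
  have [_ H] := deg_main t a b c d e f us sw (size_nseq N true).
  by move: H; rewrite su.
move=> x.
transitivity (horner_eval x (ZG (t%:P) (a%:P) (b%:P) (c%:P) (d%:P) (e%:P) (f%:P) N.+1 (map polyC us) (rcons (map polyC ws) 'X))); last by [].
have hC : forall r : R, horner_eval x r%:P = r by move=> r; rewrite /horner_eval hornerC.
have hX : horner_eval x 'X = x by rewrite /horner_eval hornerX.
by rewrite ZG_morph /= map_rcons !hornerC_map /horner_eval !hornerC hornerX.
Qed.

Unset Implicit Arguments.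

Theorem mainTheorem6 (R : numClosedFieldType) (t a b c d e f : R)
  (ht0 : t != 0) (ha : a != 0) (hb : b != 0) (hc : c != 0) (hd : d != 0)
  (he : e != 0) (hf : f != 0) (ht1 : t != 1)
  (h1 : c * d + a * f = 0) (h2 : t * c * d + b * e = 0) :
  (* (1) polynomial in w_N of degree at most N-1 *)
  (forall (N : nat) (us ws : seq R), size us = N.+1 -> size ws = N ->
     exists p : {poly R}, (size p <= N.+1)%N /\
       forall x : R, Zpf t a b c d e f N.+1 us (rcons ws x) = p.[x]) /\
  (* (2) symmetric in u_1, ..., u_N *)
  (forall (N : nat) (us us' ws : seq R), size us = N -> size ws = N ->
     perm_eq us us' -> Zpf t a b c d e f N us ws = Zpf t a b c d e f N us' ws) /\
  (* (3) Z_1 *)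
  (forall u1 w1 : R, Zpf t a b c d e f 1 [:: u1] [:: w1] = (1 - t) * c * u1) /\
  (* (4) recursion at w_N = - a u_k / b, k 0-based *)
  (forall (N : nat) (us ws : seq R) (k : nat), (2 <= N)%N ->
     size us = N -> size ws = (N - 1)%N -> (k < N)%N ->
     Zpf t a b c d e f N us (rcons ws (- (a * us`_k) / b)) =
       (1 - t) * c * a ^+ (N - 1) * us`_k
       * (\prod_(j < N | j != k :> nat) (t * us`_j - us`_k))
       * (\prod_(w <- ws) (e * us`_k + f * w))
       * Zpf t a b c d e f (N - 1) (take k us ++ drop k.+1 us) ws).
Proof.
split.
  move=> N us ws su sw.
  have [p [hp hx]] := @part1 R t a b c d e f N us ws su sw.
  by exists p; split => // x; rewrite Zpf_eq hx.
split.
  move=> N us us' ws su sw pe; rewrite !Zpf_eq.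
  exact: (@sym_part R t a b c d e f ht0 h1 h2 N us us' ws sw pe).
split.
  by move=> u1 w1; rewrite Zpf_eq part3.
move=> N us ws k hN su sw kN; rewrite !Zpf_eq.
exact: (@part4 R t a b c d e f ht0 hb h1 h2 N us ws k hN su sw kN).
Qed.
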